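(* Identify $\mathbb{R}^2$ with $\mathbb{C}$. Let $x,y\in\mathbb{B}^2$ and put $\xi=\frac{x+y}{|x+y|}$ if $x+y\ne0$ and $\xi=e_1=1$ if $x+y=0$; put $\zeta=i\xi$. Define $$x'=\tfrac{x+y}{2}-\tfrac{|x-y|}{2}\xi,\quad y'=\tfrac{x+y}{2}+\tfrac{|x-y|}{2}\xi,\quad x''=\tfrac{x+y}{2}-\tfrac{|x-y|}{2}\zeta,\quad y''=\tfrac{x+y}{2}+\tfrac{|x-y|}{2}\zeta,$$ and assume $x',y'\in\mathbb{B}^2$. Then $x'',y''\in\mathbb{B}^2$ and $$\tilde\tau_{\mathbb{B}^2}(x'',y'')\le\tilde\tau_{\mathbb{B}^2}(x,y)\le\tilde\tau_{\mathbb{B}^2}(x',y').$$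
   Context: $\mathbb{B}^2$ is the open unit disk. For a proper subdomain $D\subsetneq\mathbb{R}^n$ and $x,y\in D$, $\tilde\tau_D(x,y)=\log\big(1+\sup_{p\in\partial D}\frac{|x-y|}{\sqrt{|x-p||y-p|}}\big)$ (the scale invariant Cassinian metric). *)

(* Defs.v *)
From Stdlib Require Import Reals Lra ClassicalEpsilon.
Open Scope R_scope.

Definition pt := (R * R)%type.

Definition padd (u v : pt) : pt := (fst u + fst v, snd u + snd v).
Definition psub (u v : pt) : pt := (fst u - fst v, snd u - snd v).
Definition pscal (c : R) (u : pt) : pt := (c * fst u, c * snd u).
Definition pnorm (u : pt) : R := sqrt (fst u ^ 2 + snd u ^ 2).
Definition pmul_i (u : pt) : pt := (- snd u, fst u).

Definition unit_disk (z : pt) : Prop := pnorm z < 1.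

Definition boundary (D : pt -> Prop) (p : pt) : Prop :=
  forall eps, 0 < eps ->
    (exists a, D a /\ pnorm (psub a p) < eps) /\
    (exists b, ~ D b /\ pnorm (psub b p) < eps).

Definition Rsup (E : R -> Prop) : R :=
  epsilon (inhabits 0) (fun s => is_lub E s).

Definition tau_tilde (D : pt -> Prop) (x y : pt) : R :=
  ln (1 + Rsup (fun t => exists p, boundary D p /\
        t = pnorm (psub x y) / sqrt (pnorm (psub x p) * pnorm (psub y p)))).

Definition xi_of (x y : pt) : pt :=
  if Req_EM_T (pnorm (padd x y)) 0 then (1, 0)
  else pscal (/ pnorm (padd x y)) (padd x y).

(* Main.v *)
Require Import Defs.
From Stdlib Require Import Reals Lra Lia Psatz ClassicalEpsilon.
Open Scope R_scope.

Definition Qn (s c1 c2 p1 p2 : R) : R :=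
  ((s + c1 - p1)^2 + (c2 - p2)^2) * ((s - c1 - p1)^2 + (- c2 - p2)^2).

Lemma Qn_form s c1 c2 p1 p2 r : c1^2 + c2^2 = r^2 ->
  Qn s c1 c2 p1 p2 = (((p1-s)^2 + p2^2) + r^2)^2 - 4*((p1-s)*c1+p2*c2)^2.
Proof. intros H. unfold Qn. rewrite <- H. ring. Qed.

Lemma C1 s r c1 c2 p1 p2 : 0 <= s -> 0 <= r -> s + r < 1 -> c1^2 + c2^2 = r^2 ->
  p1^2 + p2^2 = 1 -> ((1-s)^2 - r^2)^2 <= Qn s c1 c2 p1 p2.
Proof.
  intros Hs Hr Hsr Hc Hp.
  rewrite (Qn_form _ _ _ _ _ r Hc).
  set (N := (p1-s)^2 + p2^2).
  assert (HCS : ((p1-s)*c1+p2*c2)^2 <= N * r^2).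
  { unfold N; rewrite <- Hc. pose proof (pow2_ge_0 ((p1-s)*c2 - p2*c1)). nra. }
  assert (Hp1 : p1 <= 1) by nra.
  assert (HN : N = 1 - 2*s*p1 + s^2) by (unfold N; nra).
  assert (HN2 : (1-s)^2 <= N) by nra.
  assert (HB : 0 <= (1-s)^2 - r^2) by nra.
  assert (H3 : (N - r^2)^2 <= (N + r^2)^2 - 4*((p1-s)*c1+p2*c2)^2) by nra.
  assert (H4 : ((1-s)^2 - r^2)^2 <= (N - r^2)^2) by nra.
  lra.
Qed.

Lemma key_bound N0 r v0 T D : 0 < N0 -> r^2 <= T -> T <= N0 -> v0^2 <= N0 ->
  r^2*v0^2 <= D*N0 ->
  (T + r^2)^2 - 4*T*D <= (N0 + r^2)^2 - 4*r^2*v0^2.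
Proof.
  intros HN HT1 HT2 Hv HD.
  assert (Hr : 0 <= r^2) by nra.
  assert (E : N0*((N0 + r^2)^2 - 4*r^2*v0^2) - (N0*(T+r^2)^2 - 4*T*r^2*v0^2)
     = (N0-T)*(N0*(N0+T+2*r^2) - 4*r^2*v0^2)) by ring.
  assert (F1 : 0 <= N0*(N0+T+2*r^2) - 4*r^2*v0^2) by nra.
  assert (F2 : 0 <= (N0-T)*(N0*(N0+T+2*r^2) - 4*r^2*v0^2)) by nra.
  assert (F3 : N0*((T + r^2)^2 - 4*T*D) <= N0*(T+r^2)^2 - 4*T*r^2*v0^2) by nra.
  apply (Rmult_le_reg_l N0); lra.
Qed.

Lemma ray_witness s r c1 c2 e1 e2 u v0 :
  0 <= s -> 0 <= r -> s + r < 1 -> c1^2+c2^2 = r^2 -> e1^2+e2^2 = 1 ->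
  s <= u -> u <= 1 -> v0^2 = 1 - u^2 ->
  u - s <= e1 * sqrt (1 - 2*s*u + s^2) ->
  r^2*v0^2 <= (e1*c1+e2*c2)^2 * (1 - 2*s*u + s^2) ->
  exists p1 p2, p1^2+p2^2 = 1 /\
    Qn s c1 c2 p1 p2 <= ((1 - 2*s*u + s^2) + r^2)^2 - 4*r^2*v0^2.
Proof.
  intros Hs Hr Hsr Hc He Hsu Hu1 Hv Hk HD.
  set (N0 := 1 - 2*s*u + s^2) in *.
  assert (HN0v : N0 = 1 - 2*s*u + s^2) by reflexivity.
  assert (HN0 : (1-s)^2 <= N0) by (unfold N0; nra).
  assert (HN0p : 0 < N0) by nra.
  set (L0 := sqrt N0) in *.
  assert (HL0 : L0 * L0 = N0) by (apply sqrt_sqrt; lra).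
  assert (HL0p : 0 < L0) by (apply sqrt_lt_R0; lra).
  assert (He1 : 0 <= e1).
  { destruct (Rle_dec 0 e1) as [h|h]; [exact h|exfalso]. assert (e1*L0 < 0) by (apply Rmult_neg_pos; lra). lra. }
  assert (He1' : e1 <= 1) by nra.
  set (S := sqrt (s^2*e1^2 + 1 - s^2)).
  assert (HS : S * S = s^2*e1^2 + 1 - s^2) by (apply sqrt_sqrt; nra).
  assert (HS0 : 0 <= S) by apply sqrt_pos.
  assert (HSe : s*e1 <= S) by nra.
  set (l := -s*e1 + S).
  assert (Hl0 : 0 <= l) by (unfold l; lra).
  assert (Hleq : l^2 + 2*s*e1*l = 1 - s^2) by (unfold l; nra).
  assert (HlL : l <= L0).
  { destruct (Rle_dec l L0) as [h|h]; [exact h|exfalso].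
    assert (L0 < l) by lra. assert (L0*L0 < l*l) by nra.
    assert (e1*L0 <= e1*l) by (apply Rmult_le_compat_l; lra).
    assert (s*(u-s) <= s*(e1*l)) by (apply Rmult_le_compat_l; lra). nra. }
  assert (Hl1 : 1 - s <= l).
  { destruct (Rle_dec (1-s) l) as [h|h]; [exact h|exfalso].
    assert (l < 1-s) by lra.
    assert (s*(e1*l) <= s*l) by (apply Rmult_le_compat_l; nra).
    assert (l*l < (1-s)*(1-s)) by nra.
    assert (s*l <= s*(1-s)) by (apply Rmult_le_compat_l; lra). nra. }
  exists (s + l*e1), (l*e2). split.
  - nra.
  - rewrite (Qn_form _ _ _ _ _ r Hc).
    replace ((s + l*e1 - s)^2 + (l*e2)^2) with (l^2) by (replace (s + l*e1 - s) with (l*e1) by ring; nra).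
    replace ((s + l * e1 - s) * c1 + l * e2 * c2) with (l*(e1*c1+e2*c2)) by ring.
    replace (4 * (l * (e1 * c1 + e2 * c2)) ^ 2) with (4*(l^2)*((e1*c1+e2*c2)^2)) by ring.
    apply key_bound; try lra.
    + nra.
    + assert (l*l <= L0*L0) by nra. nra.
    + unfold N0; nra.
Qed.

Lemma Qn2_form s r q1 q2 : q1^2+q2^2 = 1 ->
  Qn s 0 (-r) q1 q2 = (1 + s^2 + r^2 - 2*s*q1)^2 - 4*r^2*(1 - q1^2).
Proof.
  intros H. assert (H' : q2^2 = 1 - q1^2) by lra.
  transitivity (((s-q1)^2 + r^2 + q2^2)^2 - 4*r^2*q2^2).
  - unfold Qn. ring.
  - rewrite H'. ring.
Qed.

Lemma kappa_lemma k g A B : 0 <= k -> 0 <= g -> k^2 + g^2 = 1 -> 0 <= A -> 0 <= B ->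
  A^2 + B^2 = 1 -> A <= g -> k <= k*B + g*A.
Proof.
  intros Hk Hg Hkg HA HB HAB HAg.
  assert (E : (k*B + g*A - k)*(1+B) = A*(g*(1+B) - k*A)) by nra.
  assert (Hk1 : k <= 1) by nra.
  assert (F : 0 <= A*(g*(1+B) - k*A)).
  { apply Rmult_le_pos; [lra|]. assert (k*A <= A) by nra. nra. }
  assert (0 <= (k*B + g*A - k)) ; [|lra].
  destruct (Rle_dec 0 (k*B + g*A - k)) as [h|h]; [exact h|exfalso].
  assert ((k*B + g*A - k)*(1+B) < 0) by (apply Rmult_neg_pos; lra). lra.
Qed.

Lemma C3 s r c1 c2 : 0 <= s -> 0 <= r -> s + r < 1 -> c1^2 + c2^2 = r^2 ->
  exists p1 p2, p1^2+p2^2 = 1 /\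
    forall q1 q2, q1^2+q2^2 = 1 -> Qn s c1 c2 p1 p2 <= Qn s 0 (-r) q1 q2.
Proof.
  intros Hs Hr Hsr Hc.
  set (P := s^2 + r^2). set (K := 1 + P).
  assert (HP1 : P < 1) by (unfold P; nra).
  destruct (Rle_dec (2*P) (s*K)) as [HA|HB].
  - exists 1, 0. split; [lra|]. intros q1 q2 Hq.
    rewrite (Qn2_form _ _ _ _ Hq).
    rewrite (Qn_form _ _ _ _ _ r Hc).
    assert (Hq1 : q1 <= 1) by nra.
    assert (F : 0 <= (1 - q1)*(s*K - P*(q1+1))).
    { apply Rmult_le_pos; [lra|]. unfold K, P in *; nra. }
    assert (E : (1 + s^2 + r^2 - 2*s*q1)^2 - 4*r^2*(1 - q1^2) - ((1-s)^2+r^2)^2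
              = 4*((1 - q1)*(s*K - P*(q1+1)))) by (unfold K, P; ring).
    assert (0 <= ((1 - s) * c1 + 0 * c2) ^ 2) by apply pow2_ge_0.
    replace ((1 - s) ^ 2 + 0 ^ 2 + r ^ 2) with ((1-s)^2+r^2) by ring.
    lra.
  - assert (HB' : s*K < 2*P) by lra.
    assert (HPp : 0 < P) by (unfold K in *; nra).
    set (u := s*K/(2*P)).
    assert (Hu : 2*P*u = s*K) by (unfold u; field; lra).
    assert (Hsu : s <= u).
    { assert (2*P*(u - s) = s*(1-P)) by (unfold K in Hu; nra). nra. }
    assert (Hu1 : u < 1) by nra.
    set (v0 := sqrt (1 - u^2)).
    assert (Hv0 : v0*v0 = 1 - u^2) by (apply sqrt_sqrt; nra).
    assert (Hv00 : 0 <= v0) by apply sqrt_pos.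
    set (N0 := 1 - 2*s*u + s^2).
    assert (HN0v : N0 = 1 - 2*s*u + s^2) by reflexivity.
    set (T0 := (N0 + r^2)^2 - 4*r^2*v0^2).
    assert (Hlow : forall q1 q2, q1^2+q2^2 = 1 -> T0 <= Qn s 0 (-r) q1 q2).
    { intros q1 q2 Hq. rewrite (Qn2_form _ _ _ _ Hq). unfold T0.
      assert (E : (1 + s^2 + r^2 - 2*s*q1)^2 - 4*r^2*(1 - q1^2) - ((N0 + r^2)^2 - 4*r^2*v0^2)
                  = 4*(q1-u)*(P*(q1+u) - s*K)).
      { rewrite HN0v. replace (v0^2) with (1-u^2) by lra. unfold K, P. ring. }
      assert (E2 : 4*(q1-u)*(P*(q1+u) - s*K) = 4*P*(q1-u)^2) by (rewrite <- Hu; ring).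
      assert (0 <= 4*P*(q1-u)^2) by (apply Rmult_le_pos; [lra|apply pow2_ge_0]).
      lra. }
    assert (Hwit : exists p1 p2, p1^2+p2^2 = 1 /\ Qn s c1 c2 p1 p2 <= T0).
    2:{ destruct Hwit as [p1 [p2 [Hp Hle]]]. exists p1, p2. split; [exact Hp|].
        intros q1 q2 Hq. specialize (Hlow q1 q2 Hq). lra. }
    assert (HN0p : (1-s)^2 <= N0) by nra.
    set (L0 := sqrt N0).
    assert (HL0 : L0 * L0 = N0) by (apply sqrt_sqrt; nra).
    assert (HL0p : 0 < L0) by (apply sqrt_lt_R0; nra).
    assert (Hv0N : v0^2 <= N0) by nra.
    assert (HuL : u - s <= L0) by nra.
    unfold T0.
    destruct (Rle_dec (r^2*v0^2) (c1^2 * N0)) as [H1|H1].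
    + apply (ray_witness s r c1 c2 1 0 u v0); try lra.
      * rewrite <- HN0v. fold L0. lra.
      * rewrite <- HN0v. nra.
    + assert (Hrp : 0 < r).
      { destruct (Rle_dec r 0) as [h|h]; [|lra]. exfalso.
        assert (r = 0) by lra. subst r. apply H1. 
        assert (0 <= c1^2*N0) by (apply Rmult_le_pos; nra). nra. }
      set (k := (u-s)/L0). set (g := v0/L0).
      assert (HkL : k*L0 = u - s) by (unfold k; field; lra).
      assert (HgL : g*L0 = v0) by (unfold g; field; lra).
      assert (Hk0 : 0 <= k) by (unfold k; apply Rmult_le_pos; [lra| left; apply Rinv_0_lt_compat; lra]).
      assert (Hg0 : 0 <= g) by (unfold g; apply Rmult_le_pos; [lra| left; apply Rinv_0_lt_compat; lra]).
      assert (Hkg : k^2 + g^2 = 1).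
      { apply (Rmult_eq_reg_r (L0*L0)); [|nra].
        replace ((k^2+g^2)*(L0*L0)) with ((k*L0)^2 + (g*L0)^2) by ring.
        rewrite HkL, HgL, HL0. nra. }
      set (a := c1/r). set (b := c2/r).
      assert (Ha : c1 = r*a) by (unfold a; field; lra).
      assert (Hb : c2 = r*b) by (unfold b; field; lra).
      assert (Hab : a^2 + b^2 = 1).
      { apply (Rmult_eq_reg_r (r*r)); [|nra].
        replace ((a^2+b^2)*(r*r)) with ((r*a)^2 + (r*b)^2) by ring.
        rewrite <- Ha, <- Hb. lra. }
      assert (Hag : a^2 < g^2).
      { apply (Rmult_lt_reg_r (r*r*(L0*L0))); [nra|].
        replace (a^2*(r*r*(L0*L0))) with ((r*a)^2 * N0) by (rewrite <- HL0; ring).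
        replace (g^2*(r*r*(L0*L0))) with (r^2*(g*L0)^2) by ring.
        rewrite <- Ha, HgL. lra. }
      assert (Hsg : exists sa sb, sa^2 = 1 /\ sb^2 = 1 /\ 0 <= sa*a /\ 0 <= sb*b).
      { destruct (Rle_dec 0 a); destruct (Rle_dec 0 b).
        - exists 1, 1. repeat split; nra.
        - exists 1, (-1). repeat split; nra.
        - exists (-1), 1. repeat split; nra.
        - exists (-1), (-1). repeat split; nra. }
      destruct Hsg as [sa [sb [Hsa [Hsb [Ha0 Hb0]]]]].
      assert (HA : (sa*a)^2 + (sb*b)^2 = 1).
      { replace ((sa*a)^2 + (sb*b)^2) with (sa^2*a^2 + sb^2*b^2) by ring.
        rewrite Hsa, Hsb. lra. }
      assert (HAg : sa*a <= g).
      { assert ((sa*a)^2 = a^2) by (replace ((sa*a)^2) with (sa^2*a^2) by ring; rewrite Hsa; ring).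
        nra. }
      pose proof (kappa_lemma k g (sa*a) (sb*b) Hk0 Hg0 Hkg Ha0 Hb0 HA HAg) as Hke.
      apply (ray_witness s r c1 c2 (k*(sb*b) + g*(sa*a)) (g*sa*b - k*sb*a) u v0); try lra.
      * replace ((k * (sb * b) + g * (sa * a)) ^ 2 + (g * sa * b - k * sb * a) ^ 2)
          with (k^2*sb^2*(a^2+b^2) + g^2*sa^2*(a^2+b^2)) by ring.
        rewrite Hsa, Hsb, Hab. lra.
      * rewrite <- HN0v. fold L0.
        assert (k*L0 <= (k*(sb*b) + g*(sa*a))*L0) by (apply Rmult_le_compat_r; lra).
        lra.
      * rewrite <- HN0v. rewrite Ha, Hb.
        replace ((k * (sb * b) + g * (sa * a)) * (r * a) + (g * sa * b - k * sb * a) * (r * b))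
          with (r*g*sa*(a^2+b^2)) by ring.
        rewrite Hab.
        replace ((r * g * sa * 1) ^ 2 * N0) with (r^2*sa^2*(g*L0)^2) by (rewrite <- HL0; ring).
        rewrite Hsa, HgL. lra.
Qed.

Lemma ln_le' x y : 0 < x -> x <= y -> ln x <= ln y.
Proof. intros Hx Hxy. destruct (Rle_lt_or_eq_dec x y Hxy) as [h|h].
  - left. apply ln_increasing; lra.
  - subst; lra. Qed.

Lemma sqrt_lt1 N : 0 <= N -> (sqrt N < 1 <-> N < 1).
Proof.
  intros HN. split; intros H.
  - destruct (Rlt_le_dec N 1) as [h|h]; [exact h|].
    apply sqrt_le_1_alt in h. rewrite sqrt_1 in h. lra.
  - rewrite <- sqrt_1. apply sqrt_lt_1_alt. lra.
Qed.

Lemma unit_disk_iff z : unit_disk z <-> fst z ^2 + snd z ^2 < 1.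
Proof. unfold unit_disk, pnorm. apply sqrt_lt1. nra. Qed.

Lemma tri a1 a2 b1 b2 :
  sqrt ((a1+b1)^2 + (a2+b2)^2) <= sqrt (a1^2+a2^2) + sqrt (b1^2+b2^2).
Proof.
  set (A := sqrt (a1^2+a2^2)). set (B := sqrt (b1^2+b2^2)).
  assert (HA : A*A = a1^2+a2^2) by (apply sqrt_sqrt; nra).
  assert (HB : B*B = b1^2+b2^2) by (apply sqrt_sqrt; nra).
  assert (HA0 : 0 <= A) by apply sqrt_pos. assert (HB0 : 0 <= B) by apply sqrt_pos.
  assert (CS : (a1*b1+a2*b2)^2 <= (A*B)^2).
  { replace ((A*B)^2) with ((A*A)*(B*B)) by ring. rewrite HA, HB.
    pose proof (pow2_ge_0 (a1*b2 - a2*b1)). nra. }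
  assert (CS2 : a1*b1+a2*b2 <= A*B).
  { assert (0 <= A*B) by nra. nra. }
  rewrite <- (sqrt_square (A+B)) by lra.
  apply sqrt_le_1_alt. nra.
Qed.

Lemma bd_iff p : boundary unit_disk p <-> fst p ^2 + snd p ^2 = 1.
Proof.
  destruct p as [p1 p2]; cbn [fst snd]. split.
  - intros H. set (N := p1^2 + p2^2).
    assert (HN0 : 0 <= N) by (unfold N; nra).
    destruct (Rtotal_order N 1) as [h|[h|h]]; [exfalso| exact h | exfalso].
    + assert (Hs : sqrt N < 1) by (apply sqrt_lt1; lra).
      destruct (H (1 - sqrt N)) as [_ [b [Hb Hbp]]]; [lra|].
      apply Hb. destruct b as [b1 b2]. unfold unit_disk, pnorm, psub in *; cbn [fst snd] in *.
      pose proof (tri (b1 - p1) (b2 - p2) p1 p2) as T.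
      replace (b1 - p1 + p1) with b1 in T by ring. replace (b2 - p2 + p2) with b2 in T by ring.
      fold N in T. lra.
    + assert (Hs : 1 < sqrt N) by (rewrite <- sqrt_1; apply sqrt_lt_1_alt; lra).
      destruct (H (sqrt N - 1)) as [[a [Ha Hap]] _]; [lra|].
      destruct a as [a1 a2]. unfold unit_disk, pnorm, psub in *; cbn [fst snd] in *.
      pose proof (tri (p1 - a1) (p2 - a2) a1 a2) as T.
      replace (p1 - a1 + a1) with p1 in T by ring. replace (p2 - a2 + a2) with p2 in T by ring.
      replace ((p1 - a1)^2 + (p2-a2)^2) with ((a1 - p1)^2 + (a2-p2)^2) in T by ring.
      fold N in T. lra.
  - intros H eps Heps. split.
    + set (t := Rmin (eps/2) (1/2)).
      assert (Ht : 0 < t /\ t < eps /\ t <= 1/2).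
      { unfold t. split; [apply Rmin_pos; lra|]. split.
        - pose proof (Rmin_l (eps/2) (1/2)). lra.
        - apply Rmin_r. }
      exists ((1-t)*p1, (1-t)*p2). unfold unit_disk, pnorm, psub; cbn [fst snd]. split.
      * apply sqrt_lt1; [nra|]. replace (((1 - t) * p1) ^ 2 + ((1 - t) * p2) ^ 2) with ((1-t)^2*(p1^2+p2^2)) by ring.
        rewrite H. nra.
      * replace (((1 - t) * p1 - p1) ^ 2 + ((1 - t) * p2 - p2) ^ 2) with (t^2*(p1^2+p2^2)) by ring.
        rewrite H, Rmult_1_r, sqrt_pow2; lra.
    + exists (p1, p2). unfold unit_disk, pnorm, psub; cbn [fst snd]. split.
      * rewrite H, sqrt_1. lra.
      * replace ((p1 - p1) ^ 2 + (p2 - p2) ^ 2) with 0 by ring. rewrite sqrt_0. lra.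
Qed.

Lemma Rsup_lub E : (exists x, E x) -> (exists M, forall x, E x -> x <= M) -> is_lub E (Rsup E).
Proof.
  intros Hne Hb. unfold Rsup. apply epsilon_spec.
  destruct (completeness E) as [m Hm]; [exact Hb|exact Hne|]. exists m; exact Hm.
Qed.

Lemma prod_eq (X Y p : pt) : pnorm (psub X p) * pnorm (psub Y p) =
  sqrt (((fst X - fst p)^2 + (snd X - snd p)^2) * ((fst Y - fst p)^2 + (snd Y - snd p)^2)).
Proof. unfold pnorm, psub; cbn [fst snd]. rewrite sqrt_mult; [reflexivity| |]; apply Rplus_le_le_0_compat; apply pow2_ge_0. Qed.

Lemma mono d Q1 Q2 : 0 <= d -> 0 < Q1 -> Q1 <= Q2 -> d / sqrt Q2 <= d / sqrt Q1.
Proof.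
  intros Hd H1 H12. unfold Rdiv. apply Rmult_le_compat_l; [lra|].
  apply Rinv_le_contravar; [apply sqrt_lt_R0; lra| apply sqrt_le_1_alt; lra].
Qed.

Lemma tau_compare (X Y X' Y' : pt) (lb : R) :
  0 < lb ->
  pnorm (psub X Y) = pnorm (psub X' Y') ->
  (forall p, boundary unit_disk p -> 0 < pnorm (psub X p) * pnorm (psub Y p)) ->
  (forall p, boundary unit_disk p -> lb <= pnorm (psub X' p) * pnorm (psub Y' p)) ->
  (forall p, boundary unit_disk p -> exists p', boundary unit_disk p' /\
        pnorm (psub X' p') * pnorm (psub Y' p') <= pnorm (psub X p) * pnorm (psub Y p)) ->
  tau_tilde unit_disk X Y <= tau_tilde unit_disk X' Y'.
Proof.
  intros Hlb Hd Hpos Hlow Hwit. unfold tau_tilde.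
  set (d := pnorm (psub X Y)).
  assert (Hd0 : 0 <= d) by (unfold d, pnorm; apply sqrt_pos).
  set (E := fun t => exists p, boundary unit_disk p /\
        t = d / sqrt (pnorm (psub X p) * pnorm (psub Y p))).
  set (E' := fun t => exists p, boundary unit_disk p /\
        t = pnorm (psub X' Y') / sqrt (pnorm (psub X' p) * pnorm (psub Y' p))).
  assert (Hb0 : boundary unit_disk (1,0)) by (apply bd_iff; cbn [fst snd]; ring).
  assert (HE'b : forall t, E' t -> t <= d / sqrt lb).
  { intros t [p [Hp ->]]. rewrite <- Hd. fold d. apply mono; auto. }
  assert (HEle : forall t, E t -> exists t', E' t' /\ t <= t').
  { intros t [p [Hp ->]]. destruct (Hwit p Hp) as [p' [Hp' Hle]].
    exists (pnorm (psub X' Y') / sqrt (pnorm (psub X' p') * pnorm (psub Y' p'))).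
    split; [exists p'; split; auto|]. rewrite <- Hd. fold d. apply mono; auto.
    specialize (Hlow p' Hp'). lra. }
  assert (HEne : exists t, E t) by (eexists; exists (1,0); split; [exact Hb0|reflexivity]).
  assert (HE'ne : exists t, E' t) by (eexists; exists (1,0); split; [exact Hb0|reflexivity]).
  assert (L' : is_lub E' (Rsup E')) by (apply Rsup_lub; [exact HE'ne| exists (d / sqrt lb); exact HE'b]).
  assert (L : is_lub E (Rsup E)).
  { apply Rsup_lub; [exact HEne|]. exists (d / sqrt lb). intros t Ht.
    destruct (HEle t Ht) as [t' [Ht' Hle]]. specialize (HE'b t' Ht'). lra. }
  assert (Hle : Rsup E <= Rsup E').
  { apply (proj2 L). intros t Ht. destruct (HEle t Ht) as [t' [Ht' Hle]].
    pose proof (proj1 L' t' Ht'). lra. }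
  assert (Hge : 0 <= Rsup E).
  { set (t0 := d / sqrt (pnorm (psub X (1,0)) * pnorm (psub Y (1,0)))).
    assert (E t0) by (exists (1,0); split; [exact Hb0|reflexivity]).
    pose proof (proj1 L t0 H).
    assert (0 <= t0).
    { unfold t0. fold d. unfold Rdiv. apply Rmult_le_pos; [lra|].
      left. apply Rinv_0_lt_compat. apply sqrt_lt_R0. apply Hpos; exact Hb0. }
    lra. }
  apply ln_le'; lra.
Qed.

Lemma xi_facts x y : fst (xi_of x y) ^2 + snd (xi_of x y) ^2 = 1 /\
  exists s, 0 <= s /\ 1/2*(fst x + fst y) = s * fst (xi_of x y) /\
                     1/2*(snd x + snd y) = s * snd (xi_of x y).
Proof.
  unfold xi_of. destruct (Req_EM_T (pnorm (padd x y)) 0) as [h|h].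
  - cbn [fst snd]. split; [ring|]. exists 0.
    unfold pnorm, padd in h; cbn [fst snd] in h.
    apply sqrt_eq_0 in h; [|apply Rplus_le_le_0_compat; apply pow2_ge_0].
    pose proof (pow2_ge_0 (fst x+fst y)). pose proof (pow2_ge_0 (snd x+snd y)).
    assert (fst x + fst y = 0) by nra.
    assert (snd x + snd y = 0) by nra.
    split; [lra|split; nra].
  - set (n := pnorm (padd x y)) in *.
    assert (Hn0 : 0 <= n) by (unfold n, pnorm; apply sqrt_pos).
    assert (Hn : 0 < n) by lra.
    assert (Hnn : n * n = (fst x + fst y)^2 + (snd x + snd y)^2).
    { unfold n, pnorm, padd; cbn [fst snd]. apply sqrt_sqrt. apply Rplus_le_le_0_compat; apply pow2_ge_0. }
    unfold pscal, padd; cbn [fst snd]. split.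
    + replace ((/ n * (fst x + fst y)) ^ 2 + (/ n * (snd x + snd y)) ^ 2)
        with (((fst x + fst y)^2 + (snd x + snd y)^2) / (n*n)) by (field; lra).
      rewrite <- Hnn. field. lra.
    + exists (n/2). split; [lra|]. split; field; lra.
Qed.

Lemma transfer x1 x2 s C1 C2 X1 X2 Y1 Y2 p1 p2 : x1^2+x2^2 = 1 ->
  X1 = s*x1 + C1 -> X2 = s*x2 + C2 -> Y1 = s*x1 - C1 -> Y2 = s*x2 - C2 ->
  ((X1 - p1)^2 + (X2-p2)^2) * ((Y1-p1)^2 + (Y2-p2)^2) =
  Qn s (x1*C1+x2*C2) (x1*C2-x2*C1) (x1*p1+x2*p2) (x1*p2-x2*p1).
Proof.
  intros H HX1 HX2 HY1 HY2. subst X1 X2 Y1 Y2.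
  set (e := x1^2+x2^2) in *.
  assert (F1 : (s*e + (x1*C1+x2*C2) - (x1*p1+x2*p2))^2 + ((x1*C2-x2*C1) - (x1*p2-x2*p1))^2
     = e*((s*x1 + C1 - p1)^2 + (s*x2 + C2 - p2)^2)) by (unfold e; ring).
  assert (F2 : (s*e - (x1*C1+x2*C2) - (x1*p1+x2*p2))^2 + (-(x1*C2-x2*C1) - (x1*p2-x2*p1))^2
     = e*((s*x1 - C1 - p1)^2 + (s*x2 - C2 - p2)^2)) by (unfold e; ring).
  rewrite H in F1, F2. rewrite Rmult_1_r, Rmult_1_l in F1, F2.
  unfold Qn. rewrite F1, F2. reflexivity.
Qed.

Lemma prodQ x1 x2 s C1 C2 (X Y p : pt) : x1^2+x2^2 = 1 ->
  fst X = s*x1 + C1 -> snd X = s*x2 + C2 -> fst Y = s*x1 - C1 -> snd Y = s*x2 - C2 ->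
  pnorm (psub X p) * pnorm (psub Y p) =
  sqrt (Qn s (x1*C1+x2*C2) (x1*C2-x2*C1) (x1*fst p+x2*snd p) (x1*snd p-x2*fst p)).
Proof.
  intros H H1 H2 H3 H4. rewrite prod_eq. f_equal. apply transfer; auto.
Qed.

Lemma rot_circle x1 x2 p1 p2 : x1^2+x2^2 = 1 -> p1^2+p2^2 = 1 ->
  (x1*p1+x2*p2)^2 + (x1*p2-x2*p1)^2 = 1.
Proof. intros H Hp. replace ((x1*p1+x2*p2)^2 + (x1*p2-x2*p1)^2) with ((x1^2+x2^2)*(p1^2+p2^2)) by ring.
  rewrite H, Hp. ring. Qed.

Lemma sqrt_sq_le B Q : 0 <= B -> B^2 <= Q -> B <= sqrt Q.
Proof. intros HB HQ. rewrite <- (sqrt_pow2 B HB). apply sqrt_le_1_alt. exact HQ. Qed.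

Theorem lemma3p5 (x y : pt) :
  unit_disk x -> unit_disk y ->
  let xi := xi_of x y in
  let zeta := pmul_i xi in
  let m := pscal (1/2) (padd x y) in
  let r := pnorm (psub x y) / 2 in
  let x' := psub m (pscal r xi) in
  let y' := padd m (pscal r xi) in
  let x'' := psub m (pscal r zeta) in
  let y'' := padd m (pscal r zeta) in
  unit_disk x' -> unit_disk y' ->
  unit_disk x'' /\ unit_disk y'' /\
  tau_tilde unit_disk x'' y'' <= tau_tilde unit_disk x y /\
  tau_tilde unit_disk x y <= tau_tilde unit_disk x' y'.
Proof.
  intros Hx Hy xi zeta m r x' y' x'' y'' Hx' Hy'.
  destruct (xi_facts x y) as [Hxi [s [Hs [Hm1 Hm2]]]]. fold xi in Hxi, Hm1, Hm2.
  set (x1 := fst xi) in *. set (x2 := snd xi) in *.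
  set (c1 := (fst x - fst y)/2). set (c2 := (snd x - snd y)/2).
  assert (Hr0 : 0 <= r) by (unfold r, pnorm; assert (0 <= sqrt ((fst (psub x y))^2 + (snd (psub x y))^2)) by apply sqrt_pos; lra).
  assert (Hrc : c1^2 + c2^2 = r^2).
  { unfold r, pnorm, psub, c1, c2; cbn [fst snd].
    replace ((sqrt ((fst x - fst y) ^ 2 + (snd x - snd y) ^ 2) / 2) ^ 2)
      with ((sqrt ((fst x - fst y) ^ 2 + (snd x - snd y) ^ 2))^2 / 4) by field.
    rewrite pow2_sqrt; [field|apply Rplus_le_le_0_compat; apply pow2_ge_0]. }
  assert (EX1 : fst x = s*x1 + c1) by (unfold c1; lra).
  assert (EX2 : snd x = s*x2 + c2) by (unfold c2; lra).
  assert (EY1 : fst y = s*x1 - c1) by (unfold c1; lra).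
  assert (EY2 : snd y = s*x2 - c2) by (unfold c2; lra).
  assert (EX'1 : fst x' = s*x1 + (-r*x1)) by (unfold x', m, psub, pscal, padd; cbn [fst snd]; fold x1; lra).
  assert (EX'2 : snd x' = s*x2 + (-r*x2)) by (unfold x', m, psub, pscal, padd; cbn [fst snd]; fold x2; lra).
  assert (EY'1 : fst y' = s*x1 - (-r*x1)) by (unfold y', m, psub, pscal, padd; cbn [fst snd]; fold x1; lra).
  assert (EY'2 : snd y' = s*x2 - (-r*x2)) by (unfold y', m, psub, pscal, padd; cbn [fst snd]; fold x2; lra).
  assert (EX''1 : fst x'' = s*x1 + (r*x2)) by (unfold x'', zeta, pmul_i, m, psub, pscal, padd; cbn [fst snd]; fold x1 x2; lra).
  assert (EX''2 : snd x'' = s*x2 + (-r*x1)) by (unfold x'', zeta, pmul_i, m, psub, pscal, padd; cbn [fst snd]; fold x1 x2; lra).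
  assert (EY''1 : fst y'' = s*x1 - (r*x2)) by (unfold y'', zeta, pmul_i, m, psub, pscal, padd; cbn [fst snd]; fold x1 x2; lra).
  assert (EY''2 : snd y'' = s*x2 - (-r*x1)) by (unfold y'', zeta, pmul_i, m, psub, pscal, padd; cbn [fst snd]; fold x1 x2; lra).
  assert (Hsr : s + r < 1).
  { apply unit_disk_iff in Hy'. rewrite EY'1, EY'2 in Hy'.
    replace ((s * x1 - - r * x1) ^ 2 + (s * x2 - - r * x2) ^ 2) with ((s+r)^2*(x1^2+x2^2)) in Hy' by ring.
    rewrite Hxi in Hy'. nra. }
  assert (HB : 0 < (1-s)^2 - r^2) by nra.
  set (B := (1-s)^2 - r^2) in *.
  set (ct1 := x1*c1+x2*c2). set (ct2 := x1*c2-x2*c1).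
  assert (Hct : ct1^2 + ct2^2 = r^2).
  { unfold ct1, ct2. replace ((x1 * c1 + x2 * c2) ^ 2 + (x1 * c2 - x2 * c1) ^ 2) with ((x1^2+x2^2)*(c1^2+c2^2)) by ring.
    rewrite Hxi, Hrc. ring. }
  assert (E'1 : x1*(-r*x1) + x2*(-r*x2) = -r) by (transitivity (-r*(x1^2+x2^2)); [ring|rewrite Hxi; ring]).
  assert (E'2 : x1*(-r*x2) - x2*(-r*x1) = 0) by ring.
  assert (E''1 : x1*(r*x2) + x2*(-r*x1) = 0) by ring.
  assert (E''2 : x1*(-r*x1) - x2*(r*x2) = -r) by (transitivity (-r*(x1^2+x2^2)); [ring|rewrite Hxi; ring]).
  assert (PX : forall p, pnorm (psub x p) * pnorm (psub y p) =
     sqrt (Qn s ct1 ct2 (x1*fst p+x2*snd p) (x1*snd p-x2*fst p))).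
  { intros p. apply prodQ; auto. }
  assert (PX' : forall p, pnorm (psub x' p) * pnorm (psub y' p) =
     sqrt (Qn s (-r) 0 (x1*fst p+x2*snd p) (x1*snd p-x2*fst p))).
  { intros p. rewrite (prodQ x1 x2 s (-r*x1) (-r*x2) x' y' p); auto. rewrite E'1, E'2. reflexivity. }
  assert (PX'' : forall p, pnorm (psub x'' p) * pnorm (psub y'' p) =
     sqrt (Qn s 0 (-r) (x1*fst p+x2*snd p) (x1*snd p-x2*fst p))).
  { intros p. rewrite (prodQ x1 x2 s (r*x2) (-r*x1) x'' y'' p); auto. rewrite E''1, E''2. reflexivity. }
  assert (Hrot : forall p, boundary unit_disk p ->
     (x1*fst p+x2*snd p)^2 + (x1*snd p-x2*fst p)^2 = 1).
  { intros p Hp. apply bd_iff in Hp. apply rot_circle; auto. }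
  assert (Hsr' : 0 <= s) by exact Hs.
  split; [|split; [|split]].
  - apply unit_disk_iff. rewrite EX''1, EX''2.
    replace ((s * x1 + r * x2) ^ 2 + (s * x2 + - r * x1) ^ 2) with ((s^2+r^2)*(x1^2+x2^2)) by ring.
    rewrite Hxi. nra.
  - apply unit_disk_iff. rewrite EY''1, EY''2.
    replace ((s * x1 - r * x2) ^ 2 + (s * x2 - - r * x1) ^ 2) with ((s^2+r^2)*(x1^2+x2^2)) by ring.
    rewrite Hxi. nra.
  - apply (tau_compare x'' y'' x y B HB).
    + unfold pnorm, psub. cbn [fst snd]. f_equal. rewrite EX''1, EX''2, EY''1, EY''2, EX1, EX2, EY1, EY2.
      transitivity (4*r^2*(x1^2+x2^2)); [ring|]. rewrite Hxi, <- Hrc. ring.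
    + intros p Hp. rewrite PX''. apply (Rlt_le_trans _ B); [exact HB|].
      apply sqrt_sq_le; [lra|]. apply C1; try assumption; try lra; try (apply Hrot; exact Hp); try ring.
    + intros p Hp. rewrite PX. apply sqrt_sq_le; [lra|]. apply C1; try assumption; try lra; try (apply Hrot; exact Hp); try ring.
    + intros p Hp. destruct (C3 s r ct1 ct2 Hs Hr0 Hsr Hct) as [q1 [q2 [Hq Hle]]].
      exists (x1*q1 - x2*q2, x2*q1 + x1*q2). split.
      * apply bd_iff. cbn [fst snd].
        replace ((x1 * q1 - x2 * q2) ^ 2 + (x2 * q1 + x1 * q2) ^ 2) with ((x1^2+x2^2)*(q1^2+q2^2)) by ring.
        rewrite Hxi, Hq. ring.
      * rewrite PX, PX''. cbn [fst snd]. apply sqrt_le_1_alt.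
        replace (x1 * (x1 * q1 - x2 * q2) + x2 * (x2 * q1 + x1 * q2)) with ((x1^2+x2^2)*q1) by ring.
        replace (x1 * (x2 * q1 + x1 * q2) - x2 * (x1 * q1 - x2 * q2)) with ((x1^2+x2^2)*q2) by ring.
        rewrite Hxi, !Rmult_1_l. apply Hle. apply Hrot; exact Hp.
  - apply (tau_compare x y x' y' B HB).
    + unfold pnorm, psub. cbn [fst snd]. f_equal. rewrite EX'1, EX'2, EY'1, EY'2, EX1, EX2, EY1, EY2.
      transitivity (4*(c1^2+c2^2)); [ring|]. rewrite Hrc. transitivity (4*r^2*(x1^2+x2^2)); [rewrite Hxi; ring|ring].
    + intros p Hp. rewrite PX. apply (Rlt_le_trans _ B); [exact HB|].
      apply sqrt_sq_le; [lra|]. apply C1; try assumption; try lra; try (apply Hrot; exact Hp); try ring.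
    + intros p Hp. rewrite PX'. apply sqrt_sq_le; [lra|]. apply C1; try assumption; try lra; try (apply Hrot; exact Hp); try ring.
    + intros p Hp. exists (x1, x2). split.
      * apply bd_iff. cbn [fst snd]. exact Hxi.
      * rewrite PX, PX'. cbn [fst snd]. apply sqrt_le_1_alt.
        replace (x1*x1+x2*x2) with 1 by (rewrite <- Hxi; ring).
        replace (x1*x2-x2*x1) with 0 by ring.
        replace (Qn s (-r) 0 1 0) with (B^2) by (unfold Qn, B; ring).
        apply C1; try assumption; try lra; try (apply Hrot; exact Hp); try ring.
Qed.
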